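(* Let $X$ be a nonempty set. The monoid $FT^1(X)$ is an idempotent generated regular monoid. Moreover, if $u=g_0g_1\cdots g_n\in\Gamma(X)^+$ (with $g_j\in\Gamma(X)$) is such that there exists $k$ with $0<k<n$, $g_{j-1}\in\{g_j^l,g_j^r\}$ for all $1\le j\le k$, and $g_j\in\{g_{j-1}^l,g_{j-1}^r\}$ for all $k<j\le n$, then $[g_ng_{n-1}\cdots g_0]$ is an inverse of $[u]$ in $FT^1(X)$.
   Context: Let $1$ be a symbol not in $X$. Elements of height $\ge 2$ are triples $g=(g^l,g^c,g^r)$; $\Gamma_0(X)=\{1\}$, $\Gamma_1(X)=X$, each $x\in X$ identified with the triple $(1,x,1)$ (so $x^l=x^r=1$); for $i\ge 2$, $\Gamma_i(X)$ is the set of triples $g\in\Gamma_{i-1}(X)\times\Gamma_{i-2}(X)\times\Gamma_{i-1}(X)$ with $g^l\neq g^r$ and $g^c\in\{(g^l)^l,(g^l)^r\}\cap\{(g^r)^l,(g^r)^r\}$; $\Gamma(X)=\bigcup_{i\ge0}\Gamma_i(X)$. Let $\rho$ be the smallest congruence on $\Gamma(X)^+$ containing $(1g,g),(g1,g),(gg,g)$ for all $g\in\Gamma(X)$ and $(g^cg^lg,g)$, $(gg^rg^c,g)$, $(g^rg^cgg^cg^l,g^rg^cg^l)$ for all $g\in\Gamma_i(X)$, $i\ge2$. $FT^1(X)=\Gamma(X)^+/\rho$ and $[u]$ is the class of $u$. An inverse of $a$ is $b$ with $aba=a$, $bab=b$. *)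

(* Defs.v *)
From Stdlib Require Import List.
Import ListNotations.
Set Implicit Arguments.

Inductive gterm (X : Type) : Type :=
| G1 : gterm X
| Gx : X -> gterm X
| Gt : gterm X -> gterm X -> gterm X -> gterm X.
Arguments G1 {X}.

(* g^l and g^r; each x in X is the triple (1,x,1).  (The value on 1 is
   irrelevant: it is never used.) *)
Definition gl {X} (g : gterm X) : gterm X :=
  match g with G1 => G1 | Gx _ => G1 | Gt l _ _ => l end.
Definition gr {X} (g : gterm X) : gterm X :=
  match g with G1 => G1 | Gx _ => G1 | Gt _ _ r => r end.
Definition gc {X} (g : gterm X) : gterm X :=
  match g with G1 => G1 | Gx x => Gx x | Gt _ c _ => c end.

Inductive Gamma_i {X : Type} : nat -> gterm X -> Prop :=
| Gam0 : Gamma_i 0 G1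
| Gam1 : forall x, Gamma_i 1 (Gx x)
| GamS : forall i l c r,
    Gamma_i (S i) l -> Gamma_i i c -> Gamma_i (S i) r ->
    l <> r ->
    (c = gl l \/ c = gr l) -> (c = gl r \/ c = gr r) ->
    Gamma_i (S (S i)) (Gt l c r).

Definition Gamma {X : Type} (g : gterm X) : Prop := exists i, Gamma_i i g.

Definition isWord {X : Type} (u : list (gterm X)) : Prop :=
  u <> [] /\ Forall Gamma u.

Inductive rho {X : Type} : list (gterm X) -> list (gterm X) -> Prop :=
| rho_refl : forall u, isWord u -> rho u u
| rho_sym : forall u v, rho u v -> rho v u
| rho_trans : forall u v w, rho u v -> rho v w -> rho u w
| rho_multl : forall w u v, isWord w -> rho u v -> rho (w ++ u) (w ++ v)
| rho_multr : forall w u v, isWord w -> rho u v -> rho (u ++ w) (v ++ w)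
| rho_1l : forall g, Gamma g -> rho [G1; g] [g]
| rho_1r : forall g, Gamma g -> rho [g; G1] [g]
| rho_idem : forall g, Gamma g -> rho [g; g] [g]
| rho_cl : forall i g, 2 <= i -> Gamma_i i g -> rho [gc g; gl g; g] [g]
| rho_rc : forall i g, 2 <= i -> Gamma_i i g -> rho [g; gr g; gc g] [g]
| rho_long : forall i g, 2 <= i -> Gamma_i i g ->
    rho [gr g; gc g; g; gc g; gl g] [gr g; gc g; gl g].

(* Elements of FT^1(X) are rho-classes [u] of words u; multiplication is
   [u][v] = [u ++ v], and [u] = [v] iff rho u v. *)

Definition idempotent_word {X : Type} (e : list (gterm X)) : Prop :=
  isWord e /\ rho (e ++ e) e.

Definition inverse_word {X : Type} (a b : list (gterm X)) : Prop :=
  isWord a /\ isWord b /\ rho (a ++ b ++ a) a /\ rho (b ++ a ++ b) b.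

(* Main.v *)
Require Import Defs.
From Stdlib Require Import List Lia Classical.
Import ListNotations.


Section S.
Context {X : Type}.
Implicit Types g p q d e : gterm X.
Implicit Types u v w a b : list (gterm X).

Fixpoint ht (g : gterm X) : nat :=
  match g with G1 => 0 | Gx _ => 1 | Gt l _ _ => S (ht l) end.

Lemma Gi_ht : forall i g, Gamma_i i g -> ht g = i.
Proof. induction 1; simpl; auto. Qed.

Definition child q p := q = gl p \/ q = gr p.

Lemma G1_Gamma : @Gamma X G1. Proof. exists 0; constructor. Qed.
Hint Resolve G1_Gamma : core.

Lemma child_gamma : forall p q, Gamma p -> child q p -> Gamma q.
Proof.
  intros p q [i H] Hc. destruct H; destruct Hc as [->| ->]; simpl; auto;
  eexists; eauto.
Qed.

Lemma child_G1 : forall q, child q G1 -> q = G1.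
Proof. intros q [->| ->]; reflexivity. Qed.

Lemma child_height : forall i d e, Gamma_i i d -> d <> G1 -> child e d ->
  exists j, i = S j /\ Gamma_i j e.
Proof.
  intros i d e H Hn Hc. destruct H.
  - congruence.
  - exists 0; destruct Hc as [->| ->]; split; auto; constructor.
  - exists (S i); destruct Hc as [->| ->]; simpl; auto.
Qed.

Lemma parts : forall i g, 2 <= i -> Gamma_i i g ->
  Gamma g /\ Gamma (gl g) /\ Gamma (gc g) /\ Gamma (gr g).
Proof.
  intros i g Hi H. destruct H; try lia. simpl.
  repeat split; eexists; eauto. econstructor; eauto.
Qed.

Lemma rho_word : forall u v, rho u v -> isWord u /\ isWord v.
Proof.
  induction 1; try tauto.
  - destruct H as [Hw Hf]; destruct IHrho as [[Hu Hfu] [Hv Hfv]].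
    split; split; try (destruct w; simpl; congruence); apply Forall_app; auto.
  - destruct H as [Hw Hf]; destruct IHrho as [[Hu Hfu] [Hv Hfv]].
    split; split; try (destruct u; destruct v; simpl; congruence); apply Forall_app; auto.
  - split; split; try congruence; repeat constructor; auto.
  - split; split; try congruence; repeat constructor; auto.
  - split; split; try congruence; repeat constructor; auto.
  - destruct (parts _ _ H H0) as (?&?&?&?).
    split; split; try congruence; repeat constructor; auto.
  - destruct (parts _ _ H H0) as (?&?&?&?).
    split; split; try congruence; repeat constructor; auto.
  - destruct (parts _ _ H H0) as (?&?&?&?).
    split; split; try congruence; repeat constructor; auto.
Qed.

Lemma rho_ctx : forall l1 l2 u v, rho u v -> Forall Gamma l1 -> Forall Gamma l2 ->
  rho (l1 ++ u ++ l2) (l1 ++ v ++ l2).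
Proof.
  intros l1 l2 u v H H1 H2.
  assert (H' : rho (u ++ l2) (v ++ l2)).
  { destruct l2. rewrite !app_nil_r; auto. apply rho_multr; auto. split; [congruence|auto]. }
  destruct l1. exact H'. apply rho_multl; auto. split; [congruence|auto].
Qed.

Lemma rho_app : forall u u' v v', rho u u' -> rho v v' -> rho (u ++ v) (u' ++ v').
Proof.
  intros u u' v v' H1 H2.
  destruct (rho_word _ _ H1) as [[_ Fu] [_ Fu']]; destruct (rho_word _ _ H2) as [[_ Fv] [_ Fv']].
  pose proof (rho_ctx [] v _ _ H1 (Forall_nil _) Fv) as A1; simpl in A1.
  pose proof (rho_ctx u' [] _ _ H2 Fu' (Forall_nil _)) as A2; rewrite !app_nil_r in A2.
  eapply rho_trans; eauto.
Qed.


Ltac fg := repeat (apply Forall_cons; [assumption|]); apply Forall_nil.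
Ltac rw l1 l2 H := eapply rho_trans; [apply (rho_ctx l1 l2 _ _ H); fg | simpl].
Ltac rwb l1 l2 H := eapply rho_trans; [apply (rho_ctx l1 l2 _ _ (rho_sym H)); fg | simpl].

Lemma lemA : forall i p, Gamma_i i p -> forall q, child q p -> rho [p; q; p] [p].
Proof.
  induction 1; intros q Hq.
  - apply child_G1 in Hq; subst. assert (G : @Gamma X G1) by auto.
    rw (@nil (gterm X)) [@G1 X] (rho_idem G). apply rho_idem; auto.
  - destruct Hq as [->| ->]; simpl; assert (G : @Gamma X G1) by auto;
    assert (Gx' : Gamma (Gx x)) by (exists 1; constructor);
    rw [Gx x] (@nil (gterm X)) (rho_1l Gx'); apply rho_idem; auto.
  - assert (Hp : Gamma_i (S (S i)) (Gt l c r)) by (econstructor; eauto).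
    assert (Gp : Gamma (Gt l c r)) by (eexists; eauto).
    assert (Gl : Gamma l) by (eexists; eauto).
    assert (Gr : Gamma r) by (eexists; eauto).
    assert (Gc : Gamma c) by (eexists; eauto).
    pose proof (@rho_cl X (S (S i)) (Gt l c r) ltac:(lia) Hp) as Hcl; simpl in Hcl.
    pose proof (@rho_rc X (S (S i)) (Gt l c r) ltac:(lia) Hp) as Hrc; simpl in Hrc.
    pose proof (@rho_long X (S (S i)) (Gt l c r) ltac:(lia) Hp) as Hlg; simpl in Hlg.
    set (p := Gt l c r) in *.
    assert (K : rho [p; r; c; l; p] [p]).
    { rwb [p] [p] Hlg. rw (@nil (gterm X)) [p; c; l; p] Hrc.
      rw [p; p] (@nil (gterm X)) Hcl. rw (@nil (gterm X)) [p] (rho_idem Gp).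
      apply rho_idem; auto. }
    destruct Hq as [-> | ->]; simpl.
    + rwb (@nil (gterm X)) [l; p] Hrc. exact K.
    + rwb [p; r] (@nil (gterm X)) Hcl. exact K.
Qed.

Lemma V2L : forall i (l c r : gterm X), Gamma_i i (Gt l c r) -> 2 <= i -> rho [r; c; l] [r; Gt l c r; l].
Proof.
  intros i l c r Hp Hi.
  destruct (parts _ _ Hi Hp) as (Gp & Gl & Gc & Gr); simpl in *.
  pose proof (rho_cl Hi Hp) as Hcl; simpl in Hcl.
  pose proof (rho_rc Hi Hp) as Hrc; simpl in Hrc.
  pose proof (rho_long Hi Hp) as Hlg; simpl in Hlg.
  set (p := Gt l c r) in *.
  apply rho_sym.
  rwb [r] [l] Hcl. rwb [r] [l; p; l] (rho_idem Gc). rw [r; c] [l] Hcl.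
  rwb [r; c] [l] Hrc. rwb [r; c; p; r] [l] (rho_idem Gc).
  rw [r; c] [c; l] Hrc. exact Hlg.
Qed.

End S.


Section S.
Context {X : Type}.
Implicit Types g p q d e P : gterm X.
Implicit Types u v w a b : list (gterm X).
Ltac fg := repeat (apply Forall_cons; [assumption|]); apply Forall_nil.
Ltac lnorm := repeat (rewrite <- ?app_assoc; simpl).

Inductive desc : gterm X -> list (gterm X) -> Prop :=
| dnil : forall p, desc p []
| dcons : forall p q b, Gamma p -> child q p -> desc q b -> desc p (q :: b).

Lemma desc_gamma : forall p b, desc p b -> Gamma p -> Forall Gamma b.
Proof.
  induction 1; intros; constructor; auto.
  - eapply child_gamma; eauto.
  - apply IHdesc; eapply child_gamma; eauto.
Qed.

Lemma desc_app : forall P b (d : list (gterm X)), desc P b -> desc (last (P :: b) G1) d -> desc P (b ++ d).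
Proof.
  induction 1; simpl; intros; auto.
  constructor; auto.
Qed.

Lemma desc_snoc_inv : forall b P e, desc P (b ++ [e]) ->
  desc P b /\ Gamma (last (P :: b) G1) /\ child e (last (P :: b) G1).
Proof.
  induction b; simpl; intros P e H.
  - inversion H; subst. repeat split; auto. constructor.
  - inversion H; subst. destruct (IHb _ _ H5) as (?&?&?).
    repeat split; auto. constructor; auto.
Qed.

Lemma last_split : forall P b, exists Y, P :: b = Y ++ [last (P :: b) G1].
Proof.
  intros. exists (removelast (P :: b)). apply app_removelast_last. congruence.
Qed.

Lemma pal : forall p b, desc p b -> Gamma p -> rho (p :: b ++ rev b ++ [p]) [p].
Proof.
  induction 1; intros Gp; simpl.
  - apply rho_idem; auto.
  - assert (Gq : Gamma q) by (eapply child_gamma; eauto).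
    assert (Fb : Forall Gamma b) by (eapply desc_gamma; eauto).
    pose proof (rho_ctx [p] [p] _ _ (IHdesc Gq) ltac:(fg) ltac:(fg)) as K.
    destruct Gp as [i Hi].
    eapply rho_trans; [|apply (lemA i p Hi q H0)].
    revert K; lnorm; auto.
Qed.

Definition U P a b := rev a ++ P :: b.

Definition isLam w := exists P a b, Gamma P /\ desc P a /\ desc P b /\ w = U P a b.

Lemma U_word : forall P a b, Gamma P -> desc P a -> desc P b -> isWord (U P a b).
Proof.
  intros. split. unfold U; destruct (rev a); simpl; congruence.
  apply Forall_app; split. apply Forall_rev; eapply desc_gamma; eauto.
  constructor; auto; eapply desc_gamma; eauto.
Qed.

Lemma lam_half : forall P a b, Gamma P -> desc P a -> desc P b ->
  rho (U P a b ++ U P b a ++ U P a b) (U P a b).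
Proof.
  intros P a b GP Ha Hb. unfold U.
  pose proof (desc_gamma _ _ Ha GP) as Fa. pose proof (desc_gamma _ _ Hb GP) as Fb.
  assert (Fra : Forall Gamma (rev a)) by (apply Forall_rev; auto).
  pose proof (rho_ctx (rev a) (a ++ rev a ++ P :: b) _ _ (pal _ _ Hb GP) Fra
     ltac:(repeat (apply Forall_app; split); auto)) as K1.
  pose proof (rho_ctx (rev a) b _ _ (pal _ _ Ha GP) Fra Fb) as K2.
  eapply rho_trans; [revert K1; lnorm; intro K1; exact K1|].
  revert K2; lnorm; auto.
Qed.

End S.


Section S.
Context {X : Type}.
Implicit Types g p q d e P : gterm X.
Implicit Types u v w a b : list (gterm X).
Ltac fg := repeat (apply Forall_cons; [assumption|]); apply Forall_nil.
Ltac lnorm := repeat (rewrite <- ?app_assoc; simpl).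

Lemma last_app_ne : forall (l m : list (gterm X)) z, m <> [] -> last (l ++ m) z = last m z.
Proof.
  intros l m z Hm. destruct (exists_last Hm) as [m' [x ->]].
  rewrite app_assoc, !last_last. auto.
Qed.

Lemma rho_ctx' : forall l1 l2 u v x y, rho u v -> Forall Gamma l1 -> Forall Gamma l2 ->
  x = l1 ++ u ++ l2 -> y = l1 ++ v ++ l2 -> @rho X x y.
Proof. intros; subst; apply rho_ctx; auto. Qed.

Lemma last_U : forall P a b, last (U P a b) G1 = last (P :: b) G1.
Proof. intros; unfold U; apply last_app_ne; congruence. Qed.

Lemma lam_word : forall w, isLam w -> isWord w.
Proof. intros w (P&a&b&GP&Ha&Hb&->). apply U_word; auto. Qed.

Lemma lam_snoc : forall L q, isLam L -> Gamma (last L G1) -> child q (last L G1) ->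
  isLam (L ++ [q]).
Proof.
  intros L q (P&a&b&GP&Ha&Hb&->) G Hc. rewrite last_U in *.
  exists P, a, (b ++ [q]); repeat split; auto.
  - apply desc_app; auto. constructor; auto. constructor.
  - unfold U; lnorm; auto.
Qed.

Lemma ext1 : forall n b, length b = n -> forall P a q, Gamma P -> desc P a -> desc P b ->
  Gamma q -> child (last (P :: b) G1) q ->
  exists L, isLam L /\ last L G1 = q /\ rho (U P a b ++ [q]) L.
Proof.
  induction n; intros b Hlen P a q GP Ha Hb Gq Hc.
  - destruct b; [|discriminate]. simpl in Hc.
    exists (U q (P :: a) []). repeat split.
    + exists q, (P :: a), []. repeat split; auto. constructor; auto. constructor.
    + unfold U; simpl. apply last_last.
    + unfold U; simpl. rewrite <- app_assoc; simpl. apply rho_refl.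
      pose proof (U_word P a [] GP Ha (dnil _)) as [_ F]. unfold U in F.
      split. destruct (rev a); simpl; congruence.
      apply Forall_app in F as [F1 F2]. apply Forall_app; split; auto.
  - destruct b as [|z b0]; [discriminate|].
    destruct (exists_last (l := z :: b0) ltac:(congruence)) as [b' [e Eb]].
    rewrite Eb in *. clear z b0 Eb.
    rewrite length_app in Hlen; simpl in Hlen.
    assert (Hlen' : length b' = n) by lia.
    destruct (desc_snoc_inv _ _ _ Hb) as (Hb' & Gd & Hed).
    set (d := last (P :: b') G1) in *.
    assert (Eq : last (P :: b' ++ [e]) G1 = e) by (apply (last_last (P :: b'))).
    rewrite Eq in Hc.
    destruct (last_split P b') as [Y HY]. fold d in HY.
    assert (Ge : Gamma e) by (eapply child_gamma; eauto).
    pose proof (U_word P a b' GP Ha Hb') as [_ FU].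
    assert (FY : Forall Gamma (rev a ++ Y)).
    { unfold U in FU. rewrite HY in FU. rewrite app_assoc in FU.
      apply Forall_app in FU; tauto. }
    assert (EU : forall x y, U P a (b' ++ [x]) ++ [y] = (rev a ++ Y) ++ [d; x; y]).
    { intros; unfold U. change (P :: b' ++ [x]) with ((P :: b') ++ [x]). rewrite HY. lnorm. auto. }
    assert (EU' : forall x, U P a b' ++ [x] = (rev a ++ Y) ++ [d; x]).
    { intros; unfold U. rewrite HY. lnorm. auto. }
    destruct (classic (d = q)) as [Hdq | Hdq].
    + exists (U P a b'). repeat split.
      * exists P, a, b'; repeat split; auto.
      * rewrite last_U; auto.
      * rewrite EU. assert (U P a b' = (rev a ++ Y) ++ [d] ++ []) as ->.
        { unfold U; rewrite HY; lnorm; auto. }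
        rewrite <- Hdq. change [d; e; d] with ([d; e; d] ++ []). apply rho_ctx; auto.
        destruct Gd as [i Hi]. exact (lemA i d Hi e Hed).
    + destruct (classic (q = G1)) as [Hq1 | Hq1].
      * subst q. apply child_G1 in Hc. subst e.
        exists (U P a (b' ++ [G1])). repeat split.
        -- exists P, a, (b' ++ [G1]); repeat split; auto.
        -- rewrite last_U. exact Eq.
        -- rewrite EU. assert (U P a (b' ++ [G1]) = (rev a ++ Y) ++ [d; G1] ++ []) as ->.
           { unfold U. change (P :: b' ++ [G1]) with ((P :: b') ++ [G1]). rewrite HY; lnorm; auto. }
           apply (rho_ctx' ((rev a ++ Y) ++ [d]) [] [G1; G1] [G1]).
           apply rho_idem; auto. apply Forall_app; split; auto. constructor.
           lnorm; auto. lnorm; auto.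
      * destruct (classic (d = G1)) as [Hd1 | Hd1].
        -- assert (e = G1) by (rewrite Hd1 in Hed; apply child_G1; auto). subst e.
           destruct (IHn b' Hlen' P a q GP Ha Hb' Gq) as (L & HL & HlL & HrL).
           { fold d. rewrite Hd1. auto. }
           exists L; repeat split; auto.
           eapply rho_trans; [|exact HrL].
           rewrite EU, EU'. rewrite Hd1.
           apply (rho_ctx' (rev a ++ Y) [q] [G1; G1] [G1]).
           apply rho_idem; auto. auto. fg. lnorm; auto. lnorm; auto.
        -- destruct Gd as [i Hi]. destruct Gq as [i' Hi'].
           destruct (child_height i d e Hi Hd1 Hed) as [j [-> Hj]].
           destruct (child_height i' q e Hi' Hq1 Hc) as [j' [-> Hj']].
           assert (j' = j) as -> by (rewrite <- (Gi_ht _ _ Hj), <- (Gi_ht _ _ Hj'); auto).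
           assert (Hp : Gamma_i (S (S j)) (Gt q e d)) by (constructor; auto; congruence).
           assert (Gp : Gamma (Gt q e d)) by (eexists; eauto).
           destruct (IHn b' Hlen' P a (Gt q e d) GP Ha Hb' Gp) as (L & HL & HlL & HrL).
           { right; reflexivity. }
           exists (L ++ [q]); repeat split.
           ++ apply lam_snoc; auto; rewrite HlL; auto. left; reflexivity.
           ++ apply last_last.
           ++ rewrite EU. eapply rho_trans.
              ** apply (rho_ctx (rev a ++ Y) [] _ _ (V2L _ q e d Hp ltac:(lia)) FY (Forall_nil _)).
              ** rewrite app_nil_r.
                 change [d; Gt q e d; q] with ([d; Gt q e d] ++ [q]).
                 rewrite app_assoc, <- EU'.
                 apply rho_app; auto. apply rho_refl. split; [congruence|]. constructor; [eexists; eauto|constructor].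
Qed.

End S.


Section S.
Context {X : Type}.
Implicit Types g p q e P h : gterm X.
Implicit Types u v w a b : list (gterm X).
Ltac fg := repeat (apply Forall_cons; [assumption|]); apply Forall_nil.
Ltac lnorm := repeat (rewrite <- ?app_assoc; simpl).

Lemma down : forall i h, Gamma_i i h ->
  exists d, desc h d /\ last (h :: d) G1 = G1 /\ rho (h :: d) [h].
Proof.
  induction 1.
  - exists []; repeat split; auto. constructor. apply rho_refl; split; [congruence|]. constructor; [exists 0; constructor|constructor].
  - exists [G1]; repeat split; auto.
    + constructor. exists 1; constructor. left; auto. constructor.
    + apply rho_1r. exists 1; constructor.
  - destruct IHGamma_i2 as (dc & Hd & Hl & Hr).
    assert (Hp : Gamma_i (S (S i)) (Gt l c r)) by (constructor; auto).
    exists (r :: c :: dc); repeat split.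
    + constructor. eexists; eauto. right; auto. constructor; auto. eexists; eauto.
    + simpl in *. exact Hl.
    + pose proof (rho_word _ _ Hr) as [[_ F] _].
      eapply rho_trans.
      * apply (rho_ctx' [Gt l c r; r] [] (c :: dc) [c]); auto.
        repeat constructor; eexists; eauto. simpl; rewrite app_nil_r; auto.
      * simpl. apply (rho_rc (i := S (S i))); auto; lia.
Qed.

Lemma up : forall i h, Gamma_i i h ->
  exists d, desc h d /\ last (h :: d) G1 = G1 /\ rho (rev d ++ [h]) [h].
Proof.
  induction 1.
  - exists []; repeat split; auto. constructor. apply rho_refl; split; [congruence|]. constructor; [exists 0; constructor|constructor].
  - exists [G1]; repeat split; auto.
    + constructor. exists 1; constructor. left; auto. constructor.
    + apply rho_1l. exists 1; constructor.
  - destruct IHGamma_i2 as (dc & Hd & Hl & Hr).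
    assert (Hp : Gamma_i (S (S i)) (Gt l c r)) by (constructor; auto).
    exists (l :: c :: dc); repeat split.
    + constructor. eexists; eauto. left; auto. constructor; auto. eexists; eauto.
    + simpl in *. exact Hl.
    + pose proof (rho_word _ _ Hr) as [[_ F] _].
      eapply rho_trans.
      * apply (rho_ctx' [] [l; Gt l c r] (rev dc ++ [c]) [c]); auto.
        repeat constructor; eexists; eauto. simpl; lnorm; auto.
      * exact (@rho_cl X (S (S i)) (Gt l c r) ltac:(lia) Hp).
Qed.

Lemma last_gamma : forall l, l <> [] -> Forall Gamma l -> @Gamma X (last l G1).
Proof.
  intros l Hl F. destruct (exists_last Hl) as [l' [x ->]]. rewrite last_last.
  apply Forall_app in F as [_ F]. inversion F; auto.
Qed.

Lemma extn : forall h dh, desc h dh -> Gamma h -> forall L, isLam L ->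
  last L G1 = last (h :: dh) G1 ->
  exists L', isLam L' /\ last L' G1 = h /\ rho (L ++ rev dh ++ [h]) L'.
Proof.
  induction 1; intros Gp L HL Hlast.
  - simpl in *. exists L; repeat split; auto.
    destruct (lam_word _ HL) as [Hne F].
    pose proof (app_removelast_last G1 Hne) as E. rewrite Hlast in E.
    rewrite E. apply (rho_ctx' (removelast L) [] [p; p] [p]).
    apply rho_idem; auto. rewrite E in F. apply Forall_app in F; tauto. constructor.
    lnorm; auto. lnorm; auto.
  - assert (Gq : Gamma q) by (eapply child_gamma; eauto).
    destruct (IHdesc Gq L HL Hlast) as (L1 & HL1 & Hl1 & Hr1).
    destruct HL1 as (P & a & b1 & GP & Ha & Hb & ->).
    destruct (ext1 _ b1 eq_refl P a p GP Ha Hb Gp) as (L' & HL' & Hl' & Hr').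
    { rewrite <- (last_U P a b1), Hl1. auto. }
    exists L'; repeat split; auto.
    eapply rho_trans; [|exact Hr'].
    replace (L ++ rev (q :: b) ++ [p]) with ((L ++ rev b ++ [q]) ++ [p]) by (simpl; lnorm; auto).
    apply rho_app; auto. apply rho_refl; split; [congruence|fg].
Qed.

Lemma step : forall L h, isLam L -> Gamma h -> exists L', isLam L' /\ rho (L ++ [h]) L'.
Proof.
  intros L h HL Gh.
  destruct (lam_word _ HL) as [Hne F].
  pose proof (last_gamma _ Hne F) as [i Hm].
  destruct (down _ _ Hm) as (d & Hd & Hld & Hrd).
  destruct Gh as [j Hj].
  destruct (up _ _ Hj) as (dh & Hdh & Hldh & Hrdh).
  assert (HLd : isLam (L ++ d)).
  { destruct HL as (P & a & b & GP & Ha & Hb & ->).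
    exists P, a, (b ++ d); repeat split; auto.
    - apply desc_app; auto. rewrite <- (last_U P a b); auto.
    - unfold U; lnorm; auto. }
  assert (Hlast : last (L ++ d) G1 = G1).
  { destruct d. rewrite app_nil_r. simpl in Hld. auto.
    rewrite last_app_ne by congruence. simpl in Hld. destruct d; auto. }
  destruct (extn _ _ Hdh (ex_intro _ j Hj) (L ++ d) HLd) as (L' & HL' & _ & Hr').
  { rewrite Hlast, Hldh; auto. }
  exists L'; split; auto.
  eapply rho_trans; [|exact Hr'].
  apply rho_app; [|apply rho_sym; auto].
  destruct (exists_last Hne) as [L0 [m0 EL]].
  assert (Hm0 : last L G1 = m0) by (rewrite EL; apply last_last).
  rewrite Hm0 in Hrd. rewrite EL in F |- *.
  apply (rho_ctx' L0 [] [m0] (m0 :: d)).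
  apply rho_sym; auto. apply Forall_app in F; tauto. constructor.
  lnorm; auto. lnorm; rewrite ?app_nil_r; auto.
Qed.

Lemma main_lam : forall u, Forall Gamma u -> forall L, isLam L ->
  exists L', isLam L' /\ rho (L ++ u) L'.
Proof.
  induction 1; intros L HL.
  - exists L; split; auto. rewrite app_nil_r. apply rho_refl, lam_word; auto.
  - destruct (step L x HL H) as (L1 & HL1 & Hr1).
    destruct (IHForall L1 HL1) as (L' & HL' & Hr').
    exists L'; split; auto. eapply rho_trans; [|exact Hr'].
    replace (L ++ x :: l) with ((L ++ [x]) ++ l) by (lnorm; auto).
    destruct l. rewrite !app_nil_r; auto.
    apply rho_multr; auto. split; [congruence|auto].
Qed.

End S.


Ltac lnorm := repeat (rewrite <- ?app_assoc; simpl).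
Section S.
Context {X : Type}.
Implicit Types g p q e P h : gterm X.
Implicit Types u v w a b : list (gterm X).

Lemma lam_inverse : forall P a b, Gamma P -> desc P a -> desc P b ->
  inverse_word (U P a b) (U P b a).
Proof.
  intros. repeat split; try apply U_word; auto; try apply lam_half; auto;
  apply U_word; auto.
Qed.

Lemma desc_of_nth : forall l p, Forall Gamma (p :: l) ->
  (forall j, j < length l -> child (nth j l G1) (nth j (p :: l) G1)) -> desc p l.
Proof.
  induction l; intros p F H. constructor.
  inversion F; subst. constructor; auto.
  - apply (H 0); simpl; lia.
  - apply IHl; auto. intros j Hj. apply (H (S j)); simpl; lia.
Qed.

Lemma Forall_firstn' : forall (l : list (gterm X)) k, Forall Gamma l -> Forall Gamma (firstn k l).
Proof. induction l; intros [|k] F; simpl; auto. inversion F; constructor; auto. Qed.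
Lemma Forall_skipn' : forall (l : list (gterm X)) k, Forall Gamma l -> Forall Gamma (skipn k l).
Proof. induction l; intros [|k] F; simpl; auto. inversion F; auto. Qed.

Lemma split_nth : forall (l : list (gterm X)) k z, k < length l ->
  l = firstn k l ++ nth k l z :: skipn (S k) l.
Proof.
  induction l; intros [|k] z H; simpl in *; try lia; auto.
  f_equal. apply IHl. lia.
Qed.

Lemma part4 : forall (gs : list (gterm X)) (n k : nat),
     Forall Gamma gs -> length gs = S n ->
     0 < k < n ->
     (forall j, 1 <= j <= k ->
        nth (j - 1) gs G1 = gl (nth j gs G1) \/ nth (j - 1) gs G1 = gr (nth j gs G1)) ->
     (forall j, k < j <= n ->
        nth j gs G1 = gl (nth (j - 1) gs G1) \/ nth j gs G1 = gr (nth (j - 1) gs G1)) ->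
     inverse_word gs (rev gs).
Proof.
  intros gs n k F Hlen Hk C1 C2.
  set (P := nth k gs G1). set (a := rev (firstn k gs)). set (b := skipn (S k) gs).
  assert (Eg : gs = U P a b).
  { unfold U, a, b, P. rewrite rev_involutive. apply split_nth. lia. }
  assert (GP : Gamma P).
  { eapply Forall_forall; eauto. apply nth_In. lia. }
  assert (Fa : Forall Gamma a) by (apply Forall_rev, Forall_firstn'; auto).
  assert (Fb : Forall Gamma b) by (apply Forall_skipn'; auto).
  assert (La : length a = k) by (unfold a; rewrite length_rev, firstn_length_le; lia).
  assert (Lb : length b = n - k) by (unfold b; rewrite length_skipn; lia).
  assert (Hna : forall j, j < k -> nth j a G1 = nth (k - S j) gs G1).
  { intros j Hj. unfold a. rewrite rev_nth by (rewrite firstn_length_le; lia).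
    rewrite firstn_length_le by lia. rewrite nth_firstn.
    destruct (PeanoNat.Nat.ltb_spec (k - S j) k); auto; lia. }
  assert (Ha : desc P a).
  { apply desc_of_nth; auto. intros j Hj. rewrite La in Hj. rewrite Hna by lia.
    destruct j as [|j0].
    - unfold P. pose proof (C1 k ltac:(lia)) as H. unfold child.
      replace (k - 1) with (k - 1) in H by lia. replace (k - 1) with (k - S 0) in H by lia. exact H.
    - simpl. rewrite Hna by lia. pose proof (C1 (k - S j0) ltac:(lia)) as H.
      replace (k - S j0 - 1) with (k - S (S j0)) in H by lia. exact H. }
  assert (Hb : desc P b).
  { apply desc_of_nth; auto. intros j Hj. rewrite Lb in Hj. unfold b. rewrite nth_skipn.
    destruct j as [|j0].
    - unfold P. pose proof (C2 (S k + 0) ltac:(lia)) as H.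
      replace (S k + 0 - 1) with k in H by lia. exact H.
    - change (nth (S j0) (P :: skipn (S k) gs) G1) with (nth j0 (skipn (S k) gs) G1). rewrite nth_skipn. pose proof (C2 (S k + S j0) ltac:(lia)) as H.
      replace (S k + S j0 - 1) with (S k + j0) in H by lia. exact H. }
  assert (Er : rev gs = U P b a).
  { rewrite Eg. unfold U. rewrite rev_app_distr, rev_involutive. simpl. lnorm. auto. }
  rewrite Er, Eg. apply lam_inverse; auto.
Qed.

End S.

Theorem proposition3p6 (X : Type) (Xne : inhabited X) :
  (* FT^1(X) is a monoid with identity [1] *)
  (forall u : list (gterm X), isWord u -> rho ([G1] ++ u) u /\ rho (u ++ [G1]) u) /\
  (* idempotent generated: every element is a product of idempotents *)
  (forall u : list (gterm X), isWord u ->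
     exists es : list (list (gterm X)),
       es <> [] /\ Forall idempotent_word es /\ rho u (concat es)) /\
  (* regular: every element has an inverse *)
  (forall u : list (gterm X), isWord u -> exists v, inverse_word u v) /\
  (* the explicit inverse *)
  (forall (gs : list (gterm X)) (n k : nat),
     Forall Gamma gs -> length gs = S n ->
     0 < k < n ->
     (forall j, 1 <= j <= k ->
        nth (j - 1) gs G1 = gl (nth j gs G1) \/ nth (j - 1) gs G1 = gr (nth j gs G1)) ->
     (forall j, k < j <= n ->
        nth j gs G1 = gl (nth (j - 1) gs G1) \/ nth j gs G1 = gr (nth (j - 1) gs G1)) ->
     inverse_word gs (rev gs)).
Proof.
  split; [|split; [|split]].
  - intros u [Hne F]. split.
    + destruct u as [|g u']; [congruence|]. inversion F; subst.
      apply (rho_ctx' [] u' [G1; g] [g]); auto. apply rho_1l; auto.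
    + destruct (exists_last Hne) as [u0 [g ->]].
      apply Forall_app in F as [F0 Fg]. inversion Fg; subst.
      apply (rho_ctx' u0 [] [g; G1] [g]); auto. apply rho_1r; auto.
      lnorm; auto.
  - intros u [Hne F]. exists (map (fun g => [g]) u). repeat split.
    + destruct u; simpl; congruence.
    + apply Forall_map. eapply Forall_impl; [|exact F]. intros g Hg.
      split. split; [congruence|constructor; auto]. apply rho_idem; auto.
    + assert (concat (map (fun g => [g]) u) = u) as ->.
      { clear. induction u; simpl; f_equal; auto. }
      apply rho_refl; split; auto.
  - intros u [Hne F]. destruct u as [|h u']; [congruence|]. inversion F; subst.
    assert (HL : isLam (U h [] [])) by (exists h, [], []; repeat split; auto; constructor).
    destruct (main_lam u' H2 _ HL) as (L & (P & a & b & GP & Ha & Hb & ->) & Hr).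
    simpl in Hr. exists (U P b a).
    pose proof (lam_inverse P a b GP Ha Hb) as (W1 & W2 & I1 & I2).
    refine (conj (conj Hne F) (conj W2 (conj _ _))).
    + eapply rho_trans; [|apply rho_sym; exact Hr].
      eapply rho_trans; [|exact I1].
      apply rho_app; auto. apply rho_app; auto. apply rho_refl; auto.
    + eapply rho_trans; [|exact I2].
      apply rho_app; [apply rho_refl; auto|]. apply rho_app; auto. apply rho_refl; auto.
  - exact part4.
Qed.
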